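(* Let $X=\mathbb{Q}$ with its usual ordering, let $\Gamma$ be the group of all order-preserving permutations of $\mathbb{Q}$ acting by application, and let $I$ be the ideal of nowhere dense subsets of $\mathbb{Q}$ (in the order topology). Then the dynamical ideal $\Gamma\curvearrowright X, I$ has cofinal orbits.
   Context: For a group $\Gamma$ acting on $X$ and a $\Gamma$-invariant ideal $I$ on $X$ containing all singletons, and $a\subseteq X$, $\mathrm{pstab}(a)=\{\gamma\in\Gamma:\gamma\cdot x=x\ \forall x\in a\}$. For $a,b\in I$, $b$ is $a$-large if for every $c\in I$ there is $\gamma\in\mathrm{pstab}(a)$ with $c\subseteq\gamma\cdot b$, where $\gamma\cdot b=\{\gamma\cdot x:x\in b\}$. The dynamical ideal has cofinal orbits if for every $a\in I$ there is an $a$-large $b\in I$. *)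

(* Defs.v *)
From mathcomp Require Import all_boot all_order all_algebra.
Set Implicit Arguments. Unset Strict Implicit. Unset Printing Implicit Defensive.
Import Order.TTheory GRing.Theory Num.Theory.
Local Open Scope ring_scope.

Definition qset := rat -> Prop.

(* Order topology on Q: generated by the open intervals (p,q)
   (rays add nothing since Q has no endpoints). *)
Definition order_open (U : qset) : Prop :=
  forall x, U x -> exists p q : rat, p < x < q /\ (forall y, p < y < q -> U y).

Definition order_closure (A : qset) : qset :=
  fun x => forall U, order_open U -> U x -> exists y, U y /\ A y.

Definition nowhere_dense (A : qset) : Prop :=
  forall U, order_open U -> (forall x, U x -> order_closure A x) ->
    forall x, ~ U x.

Definition order_perm (g : rat -> rat) : Prop :=
  bijective g /\ {mono g : x y / x <= y}.

Definition pstab (a : qset) (g : rat -> rat) : Prop :=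
  order_perm g /\ (forall x, a x -> g x = x).

Definition act_image (g : rat -> rat) (b : qset) : qset :=
  fun y => exists x, b x /\ y = g x.

Definition subq (A B : qset) : Prop := forall x, A x -> B x.

Definition a_large (a b : qset) : Prop :=
  forall c, nowhere_dense c -> exists g, pstab a g /\ subq c (act_image g b).

Definition cofinal_orbits : Prop :=
  forall a, nowhere_dense a -> exists b, nowhere_dense b /\ a_large a b.

(* Main.v *)
Require Import Defs.
From mathcomp Require Import all_boot all_order all_algebra.
From mathcomp Require Import ring lra zify.
From Stdlib Require Import Classical ClassicalEpsilon.
Set Implicit Arguments. Unset Strict Implicit. Unset Printing Implicit Defensive.
Import Order.TTheory GRing.Theory Num.Theory.
Local Open Scope ring_scope.

Definition eqv (A : rat -> Prop) (x y : rat) :=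
  forall z, A z -> ((z < x) = (z < y)) /\ ((x < z) = (y < z)).
Definition gap (S : rat -> Prop) (x y : rat) := exists w, S w /\ x < w /\ w < y.
Definition rlim (S : rat -> Prop) (x : rat) :=
  forall e, 0 < e -> exists w, S w /\ x < w /\ w < x + e.
Definition llim (S : rat -> Prop) (x : rat) :=
  forall e, 0 < e -> exists w, S w /\ x - e < w /\ w < x.
Definition NDI (S : rat -> Prop) :=
  forall p q, p < q -> exists r s, p <= r /\ r < s /\ s <= q /\
    forall z, r < z -> z < s -> ~ S z.

Section Eqv.
Variable A : rat -> Prop.
Lemma eqv_refl x : eqv A x x. Proof. by move=> z _. Qed.
Lemma eqv_sym x y : eqv A x y -> eqv A y x.
Proof. by move=> h z /h [-> ->]. Qed.
Lemma eqv_trans x y w : eqv A x y -> eqv A y w -> eqv A x w.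
Proof. by move=> h1 h2 z Az; case: (h1 z Az) => -> ->; case: (h2 z Az). Qed.
Lemma eqv_conv w v y : w <= v -> v <= y -> eqv A w y -> eqv A w v.
Proof.
move=> wv vy h z Az; case: (h z Az) => h1 h2; split.
- apply/idP/idP => H; first by apply: lt_le_trans H wv.
  by rewrite h1; apply: lt_le_trans H vy.
- apply/idP/idP => H.
  + by rewrite h2 in H; apply: le_lt_trans vy H.
  + by apply: le_lt_trans wv H.
Qed.
Lemma eqv_btw lo x hi y : lo <= x -> x <= hi -> eqv A lo y -> eqv A hi y -> eqv A x y.
Proof.
move=> h1 h2 e1 e2.
have e3 : eqv A lo hi by apply: eqv_trans e1 (eqv_sym e2).
apply: eqv_trans e1; apply: eqv_sym; apply: eqv_conv h1 h2 e3.
Qed.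
Lemma eqv_A x y : A x -> eqv A x y -> x = y.
Proof.
move=> Ax h; case: (h x Ax); rewrite ltxx => h1 h2.
by apply/eqP; rewrite eq_le !leNgt -h1 -h2.
Qed.
Lemma sep_lo q1 x q2 y : q1 < x -> ~ eqv A q1 x -> eqv A q1 q2 -> eqv A x y -> q2 < y.
Proof.
move=> lt ne e1 e2; apply: contra_notT ne; rewrite -leNgt => yq2.
move=> z Az; case: (e1 z Az) => a1 a2; case: (e2 z Az) => b1 b2.
split; apply/idP/idP.
- by move=> h; apply: lt_trans h lt.
- by move=> zx; rewrite b1 in zx; rewrite a1; apply: lt_le_trans zx yq2.
- by move=> qz; rewrite a2 in qz; rewrite b2; apply: le_lt_trans yq2 qz.
- by move=> h; apply: lt_trans lt h.
Qed.
Lemma sep_hi q1 x q2 y : x < q1 -> ~ eqv A x q1 -> eqv A q1 q2 -> eqv A x y -> y < q2.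
Proof.
move=> lt ne e1 e2; apply: contra_notT ne; rewrite -leNgt => yq2.
move=> z Az; case: (e1 z Az) => a1 a2; case: (e2 z Az) => b1 b2.
split; apply/idP/idP.
- by move=> h; apply: lt_trans h lt.
- by move=> zq; rewrite a1 in zq; rewrite b1; apply: lt_le_trans zq yq2.
- by move=> xz; rewrite b2 in xz; rewrite a2; apply: le_lt_trans yq2 xz.
- by move=> h; apply: lt_trans lt h.
Qed.
End Eqv.
Lemma gap_mono (S : rat -> Prop) a a' c c' :
  a' <= a -> c <= c' -> gap S a c -> gap S a' c'.
Proof.
move=> h1 h2 [w [Sw [h3 h4]]]; exists w; split=> //; split.
- by apply: le_lt_trans h1 h3.
- by apply: lt_le_trans h4 h2.
Qed.

Lemma seq_max (s : seq (rat * rat)) (f : rat * rat -> rat) (P : pred (rat * rat)) :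
  (exists q, q \in s /\ P q) ->
  exists q, q \in s /\ P q /\ forall r, r \in s -> P r -> f r <= f q.
Proof.
elim: s => [[q []]//|a s IH] [q [qin Pq]].
case: (boolP (has P s)) => hs.
- case/hasP: hs => q' q'in Pq'.
  case: (IH (ex_intro _ q' (conj q'in Pq'))) => m [min [Pm mmax]].
  case: (leP (f a) (f m)) => fa.
  + exists m; split; first by rewrite inE min orbT.
    split=> // r; rewrite inE => /orP [/eqP -> _ //|rin Pr]; exact: mmax.
  + case: (boolP (P a)) => Pa.
    * exists a; split; first by rewrite inE eqxx.
      split=> // r; rewrite inE => /orP [/eqP -> _ //|rin Pr].
      apply: le_trans (mmax r rin Pr) _; exact: ltW.
    * exists m; split; first by rewrite inE min orbT.
      split=> // r; rewrite inE => /orP [/eqP -> |rin Pr]; last exact: mmax.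
      by rewrite (negbTE Pa).
- exists a; move: qin; rewrite inE => /orP [/eqP qa|qin].
  + subst q; split; first by rewrite inE eqxx.
    split=> // r; rewrite inE => /orP [/eqP -> //|rin Pr].
    by move/hasPn: hs => /(_ r rin); rewrite Pr.
  + by move/hasPn: hs => /(_ q qin); rewrite Pq.
Qed.

Lemma seq_min (s : seq (rat * rat)) (f : rat * rat -> rat) (P : pred (rat * rat)) :
  (exists q, q \in s /\ P q) ->
  exists q, q \in s /\ P q /\ forall r, r \in s -> P r -> f q <= f r.
Proof.
move=> h; case: (seq_max (fun q => - f q) h) => q [qin [Pq qm]].
exists q; split=> //; split=> // r rin Pr; have := qm r rin Pr; rewrite lerN2 //.
Qed.

Section BF.
Variables (A b C : rat -> Prop).

Record good (s : seq (rat * rat)) : Prop := Good {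
  g_ord : forall p q, p \in s -> q \in s -> (p.1 < q.1) = (p.2 < q.2);
  g_eqv : forall p, p \in s -> eqv A p.1 p.2;
  g_C : forall p, p \in s -> C p.1 -> b p.2;
  g_r : forall p, p \in s -> rlim C p.1 -> rlim b p.2;
  g_l : forall p, p \in s -> llim C p.1 -> llim b p.2;
  g_gap : forall p q, p \in s -> q \in s -> p.1 < q.1 -> gap C p.1 q.1 -> gap b p.2 q.2 }.

Lemma good_sub s s' : good s -> {subset s' <= s} -> good s'.
Proof.
move=> [h1 h2 h3 h4 h5 h6] sub; split.
- by move=> p q /sub pin /sub qin; apply: h1.
- by move=> p /sub; apply: h2.
- by move=> p /sub; apply: h3.
- by move=> p /sub; apply: h4.
- by move=> p /sub; apply: h5.
- by move=> p q /sub pin /sub qin; apply: h6.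
Qed.

Lemma good_le s p q : good s -> p \in s -> q \in s -> (p.1 <= q.1) = (p.2 <= q.2).
Proof. by move=> g pin qin; rewrite !leNgt (g_ord g qin pin). Qed.

Lemma good_cons s x y : good s ->
  (forall q, q \in s -> (x < q.1) = (y < q.2)) ->
  (forall q, q \in s -> (q.1 < x) = (q.2 < y)) ->
  eqv A x y -> (C x -> b y) -> (rlim C x -> rlim b y) -> (llim C x -> llim b y) ->
  (forall q, q \in s -> q.1 < x -> gap C q.1 x -> gap b q.2 y) ->
  (forall q, q \in s -> x < q.1 -> gap C x q.1 -> gap b y q.2) ->
  good ((x, y) :: s).
Proof.
move=> g o1 o2 e c r l g1 g2; split.
- move=> p q; rewrite !inE => /orP [/eqP -> |pin] /orP [/eqP -> |qin] /=.
  + by rewrite !ltxx.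
  + exact: o1.
  + exact: o2.
  + exact: (g_ord g).
- by move=> p; rewrite inE => /orP [/eqP -> //|]; apply: (g_eqv g).
- by move=> p; rewrite inE => /orP [/eqP -> //|]; apply: (g_C g).
- by move=> p; rewrite inE => /orP [/eqP -> //|]; apply: (g_r g).
- by move=> p; rewrite inE => /orP [/eqP -> //|]; apply: (g_l g).
- move=> p q; rewrite !inE => /orP [/eqP -> |pin] /orP [/eqP -> |qin] /=.
  + by rewrite ltxx.
  + exact: g2.
  + exact: g1.
  + exact: (g_gap g).
Qed.

End BF.
Lemma not_rlim (S : rat -> Prop) x : ~ rlim S x ->
  exists e, 0 < e /\ forall w, S w -> x < w -> ~ (w < x + e).
Proof.
move=> nr; apply: NNPP => H; apply: nr => e he; apply: NNPP => H2; apply: H.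
exists e; split=> // w Sw xw lt; apply: H2; by exists w.
Qed.
Lemma not_llim (S : rat -> Prop) x : ~ llim S x ->
  exists e, 0 < e /\ forall w, S w -> w < x -> ~ (x - e < w).
Proof.
move=> nr; apply: NNPP => H; apply: nr => e he; apply: NNPP => H2; apply: H.
exists e; split=> // w Sw xw lt; apply: H2; by exists w.
Qed.

Lemma sgt (a c : rat) : a < c -> 0 < c - a. Proof. by rewrite subr_gt0. Qed.

Section BF2.
Variables (A b C : rat -> Prop).
Hypothesis hAb : forall x, A x -> b x.
Hypothesis hbr : forall x, b x -> rlim b x.
Hypothesis hbl : forall x, b x -> llim b x.
Hypothesis hP3l : forall u, ~ A u -> exists w, b w /\ w < u /\ eqv A w u.
Hypothesis hP3r : forall u, ~ A u -> exists w, b w /\ u < w /\ eqv A u w.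
Hypothesis hC : NDI C.

Lemma gap_of_l v y : b y -> v < y -> gap b v y.
Proof.
move=> By vy; case: (hbl By (sgt vy)) => w [Bw [h1 h2]].
exists w; split=> //; split=> //; move: h1; rewrite opprB addrC subrK //.
Qed.
Lemma gap_of_r v y : b v -> v < y -> gap b v y.
Proof.
move=> Bv vy; case: (hbr Bv (sgt vy)) => w [Bw [h1 h2]].
exists w; split=> //; split=> //; move: h2; rewrite addrC subrK //.
Qed.

Lemma ord_of_lohi (s : seq (rat * rat)) x y q : q \in s -> q.1 != x ->
  (q.1 < x -> q.2 < y) -> (x < q.1 -> y < q.2) ->
  ((x < q.1) = (y < q.2)) /\ ((q.1 < x) = (q.2 < y)).
Proof.
move=> _ ne lo hi; case: (ltgtP x q.1) => h.
- have := hi h; move=> h'; rewrite h'; split=> //.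
  by apply/esym/negbTE; rewrite -leNgt ltW.
- have := lo h; move=> h'; rewrite h'; split=> //.
  by apply/esym/negbTE; rewrite -leNgt ltW.
- by rewrite h eqxx in ne.
Qed.

Lemma forth_b s x y : good A b C s -> (forall q, q \in s -> q.1 != x) ->
  eqv A x y -> b y ->
  (forall q, q \in s -> q.1 < x -> q.2 < y) ->
  (forall q, q \in s -> x < q.1 -> y < q.2) -> good A b C ((x, y) :: s).
Proof.
move=> g ne e By lo hi; apply: good_cons => //.
- by move=> q qin; case: (ord_of_lohi qin (ne q qin) (lo q qin) (hi q qin)).
- by move=> q qin; case: (ord_of_lohi qin (ne q qin) (lo q qin) (hi q qin)).
- by move=> _; apply: hbr.
- by move=> _; apply: hbl.
- by move=> q qin qx _; apply: gap_of_l => //; apply: lo.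
- by move=> q qin qx _; apply: gap_of_r => //; apply: hi.
Qed.

Lemma forth_nb s x y ql qh : good A b C s -> (forall q, q \in s -> q.1 != x) ->
  ql \in s -> qh \in s -> ql.1 < x -> x < qh.1 ->
  (forall r, r \in s -> r.1 < x -> r.1 <= ql.1) ->
  (forall r, r \in s -> x < r.1 -> qh.1 <= r.1) ->
  eqv A x y -> ql.2 < y -> y < qh.2 -> ~ gap b ql.2 qh.2 -> good A b C ((x, y) :: s).
Proof.
move=> g ne qlin qhin qlx xqh lmax hmin e lty ylt ngb.
have lqh : ql.1 < qh.1 by apply: lt_trans xqh.
have ngC : ~ gap C ql.1 qh.1 by move=> h; apply: ngb; apply: (g_gap g).
have lo : forall q, q \in s -> q.1 < x -> q.2 < y.
  move=> q qin qx; apply: le_lt_trans lty; rewrite -(good_le g qin qlin).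
  exact: lmax.
have hi : forall q, q \in s -> x < q.1 -> y < q.2.
  move=> q qin qx; apply: (lt_le_trans ylt); rewrite -(good_le g qhin qin).
  exact: hmin.
apply: good_cons => //.
- by move=> q qin; case: (ord_of_lohi qin (ne q qin) (lo q qin) (hi q qin)).
- by move=> q qin; case: (ord_of_lohi qin (ne q qin) (lo q qin) (hi q qin)).
- by move=> Cx; case: ngC; exists x.
- move=> r; case: (r (qh.1 - x) (sgt xqh)) => w [Cw [h1 h2]].
  case: ngC; exists w; split=> //; split; first by apply: lt_trans h1.
  by move: h2; rewrite addrC subrK.
- move=> r; case: (r (x - ql.1) (sgt qlx)) => w [Cw [h1 h2]].
  case: ngC; exists w; split=> //; split; last by apply: lt_trans h2 _.
  by move: h1; rewrite opprB addrC subrK.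
- move=> q qin qx [z [Cz [h1 h2]]].
  have qq : q.1 <= ql.1 by apply: lmax.
  case: (ltgtP z ql.1) => hz.
  + have : gap b q.2 ql.2.
      apply: (g_gap g) => //; first by apply: lt_trans hz.
      by exists z.
    by apply: gap_mono => //; apply: ltW.
  + by case: ngC; exists z; split=> //; split=> //; apply: lt_trans xqh.
  + subst z; exists ql.2; split; first by apply: (g_C g).
    by split=> //; rewrite -(g_ord g qin qlin).
- move=> q qin qx [z [Cz [h1 h2]]].
  have qq : qh.1 <= q.1 by apply: hmin.
  case: (ltgtP z qh.1) => hz.
  + by case: ngC; exists z; split=> //; split=> //; apply: lt_trans h1.
  + have : gap b qh.2 q.2.
      apply: (g_gap g) => //; first by apply: lt_trans h2.
      by exists z.
    by apply: gap_mono => //; apply: ltW.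
  + subst z; exists qh.2; split; first by apply: (g_C g).
    by split=> //; rewrite -(g_ord g qhin qin).
Qed.

Lemma forth s x : good A b C s -> exists y, good A b C ((x, y) :: s).
Proof.
move=> g.
case: (boolP (has (fun q => q.1 == x) s)) => [/hasP [q qin /eqP qx] | hx].
  exists q.2; apply: good_sub g _ => p; rewrite inE => /orP [/eqP ->|//].
  by rewrite -qx -surjective_pairing.
have ne : forall q, q \in s -> q.1 != x.
  by move=> q qin; apply: contraNN hx => h; apply/hasP; exists q.
case: (classic (A x)) => Ax.
  exists x; apply: (forth_b g ne (@eqv_refl A x) (hAb Ax)).
  - by move=> q qin; case: (g_eqv g qin Ax) => _ ->.
  - by move=> q qin; case: (g_eqv g qin Ax) => -> _.
have LS : (forall y, eqv A x y -> forall q, q \in s -> q.1 < x -> q.2 < y) \/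
  exists ql, [/\ ql \in s, ql.1 < x, forall r, r \in s -> r.1 < x -> r.1 <= ql.1
                & eqv A ql.1 x].
  case: (boolP (has (fun q => q.1 < x) s)) => hs.
  - case/hasP: hs => q0 q0in q0x.
    case: (@seq_max s fst (fun q => q.1 < x) (ex_intro _ q0 (conj q0in q0x))) => ql [qlin [qlx qlm]].
    case: (classic (eqv A ql.1 x)) => eq; first by right; exists ql.
    left=> y e q qin qx; apply: le_lt_trans (_ : ql.2 < y).
      by rewrite -(good_le g qin qlin); apply: qlm.
    apply: sep_lo qlx eq (g_eqv g qlin) e.
  - by left=> y e q qin qx; move/hasPn: hs => /(_ q qin); rewrite qx.
have HS : (forall y, eqv A x y -> forall q, q \in s -> x < q.1 -> y < q.2) \/
  exists qh, [/\ qh \in s, x < qh.1, forall r, r \in s -> x < r.1 -> qh.1 <= r.1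
                & eqv A x qh.1].
  case: (boolP (has (fun q => x < q.1) s)) => hs.
  - case/hasP: hs => q0 q0in q0x.
    case: (@seq_min s fst (fun q => x < q.1) (ex_intro _ q0 (conj q0in q0x))) => qh [qhin [qhx qhm]].
    case: (classic (eqv A x qh.1)) => eq; first by right; exists qh.
    left=> y e q qin qx; apply: (lt_le_trans (_ : y < qh.2)).
      apply: sep_hi qhx eq (g_eqv g qhin) e.
    by rewrite -(good_le g qhin qin); apply: qhm.
  - by left=> y e q qin qx; move/hasPn: hs => /(_ q qin); rewrite qx.
case: LS => [LF | [ql [qlin qlx qlm qle]]]; case: HS => [HF | [qh [qhin qhx qhm qhe]]].
- case: (hP3r Ax) => w [Bw [xw e]].
  by exists w; apply: forth_b => //; [apply: LF | apply: HF].
- case: (hP3l (_ : ~ A qh.2)) => [Aq|w [Bw [wq e]]].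
    by apply: Ax; rewrite -(eqv_A Aq (eqv_sym (eqv_trans qhe (g_eqv g qhin)))).
  have exw : eqv A x w := eqv_trans (eqv_trans qhe (g_eqv g qhin)) (eqv_sym e).
  exists w; apply: forth_b => //; first by apply: LF.
  move=> q qin qx; apply: (lt_le_trans wq).
  by rewrite -(good_le g qhin qin); apply: qhm.
- case: (hP3r (_ : ~ A ql.2)) => [Aq|w [Bw [qw e]]].
    by apply: Ax; rewrite -(eqv_A Aq (eqv_trans (eqv_sym (g_eqv g qlin)) qle)).
  have exw : eqv A x w := eqv_trans (eqv_trans (eqv_sym qle) (g_eqv g qlin)) e.
  exists w; apply: forth_b => //; last by apply: HF.
  move=> q qin qx; apply: le_lt_trans qw.
  by rewrite -(good_le g qin qlin); apply: qlm.
- have l2x : eqv A ql.2 x := eqv_trans (eqv_sym (g_eqv g qlin)) qle.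
  have h2x : eqv A qh.2 x := eqv_sym (eqv_trans qhe (g_eqv g qhin)).
  have l2h2 : ql.2 < qh.2 by rewrite -(g_ord g qlin qhin); apply: lt_trans qhx.
  case: (classic (gap b ql.2 qh.2)) => [[w [Bw [h1 h2]]] | ngb].
  + have exw : eqv A x w.
      by apply: eqv_sym; apply: eqv_btw (ltW h1) (ltW h2) l2x h2x.
    exists w; apply: forth_b => //.
    * move=> q qin qx; apply: le_lt_trans h1.
      by rewrite -(good_le g qin qlin); apply: qlm.
    * move=> q qin qx; apply: (lt_le_trans h2).
      by rewrite -(good_le g qhin qin); apply: qhm.
  + exists ((ql.2 + qh.2) / 2).
    have m1 : ql.2 < (ql.2 + qh.2) / 2 by lra.
    have m2 : (ql.2 + qh.2) / 2 < qh.2 by lra.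
    apply: (forth_nb g ne qlin qhin) => //.
    by apply: eqv_sym; apply: eqv_btw (ltW m1) (ltW m2) l2x h2x.
Qed.


Definition noC (u v : rat) := forall z, C z -> u < z -> z < v -> False.
Lemma noC_sub u v u' v' : u <= u' -> v' <= v -> noC u v -> noC u' v'.
Proof.
move=> h1 h2 n z Cz a c; apply: (n z Cz).
- exact: le_lt_trans h1 a.
- exact: lt_le_trans c h2.
Qed.

Definition LOKG (s : seq (rat * rat)) y x := (forall q, q \in s -> q.2 < y -> q.1 < x) /\
  (forall q, q \in s -> q.1 < x -> q.2 < y -> gap C q.1 x -> gap b q.2 y).
Definition HOKG (s : seq (rat * rat)) y x := (forall q, q \in s -> y < q.2 -> x < q.1) /\
  (forall q, q \in s -> x < q.1 -> y < q.2 -> gap C x q.1 -> gap b y q.2).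

Lemma back_gen s x y : good A b C s -> (forall q, q \in s -> q.2 != y) -> eqv A x y ->
  LOKG s y x -> HOKG s y x ->
  (exists r t, r < x /\ x < t /\ noC r t) -> good A b C ((x, y) :: s).
Proof.
move=> g ne e [lo g1] [hi g2] [r [t [rx [xt nc]]]].
have o : forall q, q \in s -> ((x < q.1) = (y < q.2)) /\ ((q.1 < x) = (q.2 < y)).
  move=> q qin; case: (ltgtP y q.2) => h.
  - rewrite (hi q qin h); split=> //.
    by apply/negbTE; rewrite -leNgt ltW // hi.
  - rewrite (lo q qin h); split=> //.
    by apply/negbTE; rewrite -leNgt ltW // lo.
  - by have := ne q qin; rewrite h eqxx.
apply: good_cons => //.
- by move=> q qin; case: (o q qin).
- by move=> q qin; case: (o q qin).
- by move=> Cx; case: (nc x Cx rx xt).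
- move=> rl; case: (rl (t - x) (sgt xt)) => w [Cw [h1 h2]].
  apply: False_ind; apply: (nc w Cw); first by apply: lt_trans h1.
  by move: h2; rewrite addrC subrK.
- move=> rl; case: (rl (x - r) (sgt rx)) => w [Cw [h1 h2]].
  apply: False_ind; apply: (nc w Cw); last by apply: lt_trans h2 _.
  by move: h1; rewrite opprB addrC subrK.
- move=> q qin qx; apply: g1 => //; by case: (o q qin) => _ <-.
- move=> q qin qx; apply: g2 => //; by case: (o q qin) => <-.
Qed.

Lemma back_mk s y lo hi : good A b C s -> (forall q, q \in s -> q.2 != y) -> lo < hi ->
  (forall x, lo < x -> x < hi -> eqv A x y /\ LOKG s y x /\ HOKG s y x) ->
  exists x, good A b C ((x, y) :: s).
Proof.
move=> g ne lh H; case: (hC lh) => r [t [h1 [h2 [h3 h4]]]].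
have m1 : r < (r + t) / 2 by lra.
have m2 : (r + t) / 2 < t by lra.
case: (H ((r + t) / 2)) => [||e [L Hh]].
- exact: le_lt_trans h1 m1.
- exact: lt_le_trans m2 h3.
exists ((r + t) / 2); apply: back_gen => //.
by exists r, t; split=> //; split=> // z Cz a c; exact: (h4 z a c Cz).
Qed.

Lemma lower_side s y : good A b C s -> ~ A y ->
  (forall x, eqv A x y -> LOKG s y x) \/
  exists ql, [/\ ql \in s, ql.2 < y, eqv A ql.1 y &
   (forall x, ql.1 < x -> LOKG s y x) \/
   (~ gap b ql.2 y /\ (exists e, 0 < e /\ noC ql.1 (ql.1 + e)) /\
    forall x, ql.1 < x -> noC ql.1 x -> LOKG s y x)].
Proof.
move=> g Ay.
case: (boolP (has (fun q => q.2 < y) s)) => hs; last first.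
  left=> x e; split=> q qin qy; first by move/hasPn: hs => /(_ q qin); rewrite qy.
  by move=> h; move/hasPn: hs => /(_ q qin); rewrite h.
case/hasP: hs => q0 q0in q0y.
case: (@seq_max s snd (fun q => q.2 < y) (ex_intro _ q0 (conj q0in q0y))) => ql [qlin [qly qlm]].
have below : forall q, q \in s -> q.2 < y -> q.1 <= ql.1.
  by move=> q qin qy; rewrite (good_le g qin qlin); apply: qlm.
have below2 : forall q, q \in s -> q.2 < y -> q.2 <= ql.2 by move=> q qin qy; apply: qlm.
case: (classic (eqv A ql.2 y)) => eq; last first.
  left=> x e; split.
  - move=> q qin qy; apply: le_lt_trans (below q qin qy) _.
    exact: (sep_lo qly eq (eqv_sym (g_eqv g qlin)) (eqv_sym e)).
  - move=> q qin _ qy _.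
    case: (hP3l Ay) => w [Bw [wy ewy]].
    have : ql.2 < w by apply: (sep_lo qly eq (@eqv_refl A ql.2) (eqv_sym ewy)).
    move=> qw; apply: (@gap_mono b ql.2 _ y) => //; first exact: below2.
    by exists w.
have e1 : eqv A ql.1 y := eqv_trans (g_eqv g qlin) eq.
right; exists ql; split=> //.
case: (classic (gap b ql.2 y)) => gb.
  left=> x qlx; split.
  - by move=> q qin qy; apply: le_lt_trans (below q qin qy) qlx.
  - move=> q qin _ qy _; apply: gap_mono gb => //; exact: below2.
right; split=> //.
have nrb : ~ rlim b ql.2.
  move=> rl; case: (rl (y - ql.2) (sgt qly)) => w [Bw [h1 h2]]; apply: gb.
  by exists w; split=> //; split=> //; move: h2; rewrite addrC subrK.
have nrc : ~ rlim C ql.1 by move=> h; apply: nrb; apply: (g_r g).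
case: (not_rlim nrc) => e [e0 he]; split.
  by exists e; split=> // z Cz h1 h2; apply: (he z Cz h1 h2).
move=> x qlx nc; split.
- by move=> q qin qy; apply: le_lt_trans (below q qin qy) qlx.
- move=> q qin qx qy [z [Cz [h1 h2]]].
  case: (ltgtP z ql.1) => hz.
  + have : gap b q.2 ql.2.
      apply: (g_gap g) => //; first by apply: lt_trans hz.
      by exists z.
    by apply: gap_mono => //; apply: ltW.
  + by case: (nc z Cz hz h2).
  + subst z; exists ql.2; split; first by apply: (g_C g).
    by split=> //; rewrite -(g_ord g qin qlin).
Qed.

Lemma upper_side s y : good A b C s -> ~ A y ->
  (forall x, eqv A x y -> HOKG s y x) \/
  exists qh, [/\ qh \in s, y < qh.2, eqv A qh.1 y &
   (forall x, x < qh.1 -> HOKG s y x) \/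
   (~ gap b y qh.2 /\ (exists e, 0 < e /\ noC (qh.1 - e) qh.1) /\
    forall x, x < qh.1 -> noC x qh.1 -> HOKG s y x)].
Proof.
move=> g Ay.
case: (boolP (has (fun q => y < q.2) s)) => hs; last first.
  left=> x e; split=> q qin; first by move=> qy; move/hasPn: hs => /(_ q qin); rewrite qy.
  by move=> _ h; move/hasPn: hs => /(_ q qin); rewrite h.
case/hasP: hs => q0 q0in q0y.
case: (@seq_min s snd (fun q => y < q.2) (ex_intro _ q0 (conj q0in q0y))) => qh [qhin [qhy qhm]].
have above : forall q, q \in s -> y < q.2 -> qh.1 <= q.1.
  by move=> q qin qy; rewrite (good_le g qhin qin); apply: qhm.
have above2 : forall q, q \in s -> y < q.2 -> qh.2 <= q.2 by move=> q qin qy; apply: qhm.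
case: (classic (eqv A qh.2 y)) => eq; last first.
  have eq' : ~ eqv A y qh.2 by move=> h; apply: eq; apply: eqv_sym.
  left=> x e; split.
  - move=> q qin qy; apply: (lt_le_trans _ (above q qin qy)).
    exact: (sep_hi qhy eq' (eqv_sym (g_eqv g qhin)) (eqv_sym e)).
  - move=> q qin _ qy _.
    case: (hP3r Ay) => w [Bw [yw eyw]].
    have : w < qh.2 by apply: (sep_hi qhy eq' (@eqv_refl A qh.2) eyw).
    move=> wq; apply: (@gap_mono b y _ qh.2) => //; first exact: above2.
    by exists w.
have e1 : eqv A qh.1 y := eqv_trans (g_eqv g qhin) eq.
right; exists qh; split=> //.
case: (classic (gap b y qh.2)) => gb.
  left=> x xqh; split.
  - by move=> q qin qy; apply: (lt_le_trans xqh (above q qin qy)).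
  - move=> q qin _ qy _; apply: gap_mono gb => //; exact: above2.
right; split=> //.
have nlb : ~ llim b qh.2.
  move=> rl; case: (rl (qh.2 - y) (sgt qhy)) => w [Bw [h1 h2]]; apply: gb.
  by exists w; split=> //; split=> //; move: h1; rewrite opprB addrC subrK.
have nlc : ~ llim C qh.1 by move=> h; apply: nlb; apply: (g_l g).
case: (not_llim nlc) => e [e0 he]; split.
  by exists e; split=> // z Cz h1 h2; apply: (he z Cz h2 h1).
move=> x xqh nc; split.
- by move=> q qin qy; apply: (lt_le_trans xqh (above q qin qy)).
- move=> q qin qx qy [z [Cz [h1 h2]]].
  case: (ltgtP z qh.1) => hz.
  + by case: (nc z Cz h1 hz).
  + have : gap b qh.2 q.2.
      apply: (g_gap g) => //; first by apply: lt_trans h2.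
      by exists z.
    by apply: gap_mono => //; apply: ltW.
  + subst z; exists qh.2; split; first by apply: (g_C g).
    by split=> //; rewrite -(g_ord g qhin qin).
Qed.
Lemma back s y : good A b C s -> exists x, good A b C ((x, y) :: s).
Proof.
move=> g.
case: (boolP (has (fun q => q.2 == y) s)) => [/hasP [q qin /eqP qy] | hy].
  exists q.1; apply: good_sub g _ => p; rewrite inE => /orP [/eqP ->|//].
  by rewrite -qy -surjective_pairing.
have ne : forall q, q \in s -> q.2 != y.
  by move=> q qin; apply: contraNN hy => h; apply/hasP; exists q.
case: (classic (A y)) => Ay.
  have ne1 : forall q, q \in s -> q.1 != y.
    move=> q qin; apply/eqP => qy; move: (ne q qin); rewrite -qy.
    by rewrite -(eqv_A _ (g_eqv g qin)) ?eqxx // qy.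
  exists y; apply: (forth_b g ne1 (@eqv_refl A y) (hAb Ay)).
  - by move=> q qin; case: (g_eqv g qin Ay) => _ ->.
  - by move=> q qin; case: (g_eqv g qin Ay) => -> _.
have mk := back_mk g ne.
have btw : forall lo hi x, eqv A lo y -> eqv A hi y -> lo < x -> x < hi -> eqv A x y.
  by move=> lo hi x e1 e2 h1 h2; apply: eqv_btw (ltW h1) (ltW h2) e1 e2.
have nA : forall u, eqv A u y -> ~ A u.
  by move=> u e Au; apply: Ay; rewrite -(eqv_A Au e).
case: (lower_side g Ay) => [LF | [ql [qlin qly qle LL]]];
  case: (upper_side g Ay) => [HF | [qh [qhin qhy qhe HH]]].
- case: (hP3r Ay) => w [_ [yw e]].
  apply: (mk y w yw) => x h1 h2.
  have ex : eqv A x y := btw y w x (@eqv_refl A y) (eqv_sym e) h1 h2.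
  by split=> //; split; [apply: LF | apply: HF].
- case: (hP3l (nA _ qhe)) => w [_ [wq e]].
  have ew : eqv A w y := eqv_trans e qhe.
  case: HH => [Hna | [_ [[e2 [e20 nc2]] Ha]]].
  + apply: (mk w qh.1 wq) => x h1 h2.
    have ex : eqv A x y by apply: (btw w qh.1).
    by split=> //; split; [apply: LF | apply: Hna].
  + have lt : Order.max w (qh.1 - e2) < qh.1 by rewrite gt_max wq /=; lra.
    apply: (mk _ _ lt) => x; rewrite gt_max => /andP [h1 h1'] h2.
    have ex : eqv A x y by apply: (btw w qh.1).
    split=> //; split; first by apply: LF.
    apply: Ha => //; apply: noC_sub nc2 => //; exact: ltW.
- case: (hP3r (nA _ qle)) => w [_ [qw e]].
  have ew : eqv A w y := eqv_trans (eqv_sym e) qle.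
  case: LL => [Lna | [_ [[e1 [e10 nc1]] La]]].
  + apply: (mk ql.1 w qw) => x h1 h2.
    have ex : eqv A x y by apply: (btw ql.1 w).
    by split=> //; split; [apply: Lna | apply: HF].
  + have lt : ql.1 < Order.min w (ql.1 + e1) by rewrite lt_min qw /=; lra.
    apply: (mk _ _ lt) => x h1; rewrite lt_min => /andP [h2 h2'].
    have ex : eqv A x y by apply: (btw ql.1 w).
    split=> //; split; last by apply: HF.
    apply: La => //; apply: noC_sub nc1 => //; exact: ltW.
- have lh : ql.1 < qh.1 by rewrite (g_ord g qlin qhin); apply: lt_trans qhy.
  have ex : forall x, ql.1 < x -> x < qh.1 -> eqv A x y.
    by move=> x h1 h2; apply: (btw ql.1 qh.1).
  case: LL => [Lna | [ngl [[e1 [e10 nc1]] La]]];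
    case: HH => [Hna | [ngh [[e2 [e20 nc2]] Ha]]].
  + apply: (mk ql.1 qh.1 lh) => x h1 h2.
    by split; [apply: ex | split; [apply: Lna | apply: Hna]].
  + have lt : Order.max ql.1 (qh.1 - e2) < qh.1 by rewrite gt_max lh /=; lra.
    apply: (mk _ _ lt) => x; rewrite gt_max => /andP [h1 h1'] h2.
    split; first by apply: ex.
    split; first by apply: Lna.
    apply: Ha => //; apply: noC_sub nc2 => //; exact: ltW.
  + have lt : ql.1 < Order.min qh.1 (ql.1 + e1) by rewrite lt_min lh /=; lra.
    apply: (mk _ _ lt) => x h1; rewrite lt_min => /andP [h2 h2'].
    split; first by apply: ex.
    split; last by apply: Hna.
    apply: La => //; apply: noC_sub nc1 => //; exact: ltW.
  + have nby : ~ b y by move=> By; apply: ngl; apply: gap_of_l.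
    have ngb : ~ gap b ql.2 qh.2.
      move=> [w [Bw [h1 h2]]]; case: (ltgtP w y) => hw.
      * by apply: ngl; exists w.
      * by apply: ngh; exists w.
      * by apply: nby; rewrite -hw.
    have ngc : noC ql.1 qh.1.
      move=> z Cz h1 h2; apply: ngb; apply: (g_gap g) => //; by exists z.
    apply: (mk ql.1 qh.1 lh) => x h1 h2.
    split; first by apply: ex.
    split; [apply: La | apply: Ha] => //; apply: noC_sub ngc => //; exact: ltW.
Qed.

End BF2.
Definition en (n : nat) : rat := odflt 0 (unpickle n).
Lemma en_pickle x : en (pickle x) = x. Proof. by rewrite /en pickleK. Qed.

Lemma good_nil A b C : good A b C [::].
Proof. by split. Qed.

Section BF3.
Variables (A b C : rat -> Prop).
Hypothesis hAb : forall x, A x -> b x.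
Hypothesis hbr : forall x, b x -> rlim b x.
Hypothesis hbl : forall x, b x -> llim b x.
Hypothesis hP3l : forall u, ~ A u -> exists w, b w /\ w < u /\ eqv A w u.
Hypothesis hP3r : forall u, ~ A u -> exists w, b w /\ u < w /\ eqv A u w.
Hypothesis hC : NDI C.

Let fo := @forth A b C hAb hbr hbl hP3l hP3r.
Let ba := back hAb hbr hbl hP3l hP3r hC.

Fixpoint S (n : nat) : {s : seq (rat * rat) | good A b C s} :=
  match n with
  | 0 => exist _ [::] (good_nil A b C)
  | n'.+1 =>
    let (s, g) := S n' in
    let (y, gy) := constructive_indefinite_description _ (fo (en n') g) in
    let (x, gx) := constructive_indefinite_description _ (ba (en n') gy) in
    exist _ ((x, en n') :: (en n', y) :: s) gx
  end.

Lemma S_succ n : exists x y, sval (S n.+1) = (x, en n) :: (en n, y) :: sval (S n).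
Proof.
rewrite /=; case: (S n) => s g /=.
case: constructive_indefinite_description => y gy.
case: constructive_indefinite_description => x gx /=.
by exists x, y.
Qed.

Lemma S_mono n m : (n <= m)%N -> {subset sval (S n) <= sval (S m)}.
Proof.
elim: m => [|m IH]; first by rewrite leqn0 => /eqP ->.
rewrite leq_eqVlt => /orP [/eqP -> //|]; rewrite ltnS => /IH h p /h pin.
case: (S_succ m) => x [y ->]; by rewrite !inE pin !orbT.
Qed.

Definition R x y := exists n, (x, y) \in sval (S n).

Lemma R_common x y x' y' : R x y -> R x' y' ->
  exists n, (x, y) \in sval (S n) /\ (x', y') \in sval (S n).
Proof.
move=> [n h] [m h']; exists (maxn n m); split.
- by apply: (S_mono (leq_maxl n m)).
- by apply: (S_mono (leq_maxr n m)).
Qed.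

Lemma R_ord x y x' y' : R x y -> R x' y' -> (x < x') = (y < y').
Proof.
move=> r r'; case: (R_common r r') => n [h h'].
exact: (g_ord (svalP (S n)) h h').
Qed.

Lemma R_fun x y y' : R x y -> R x y' -> y = y'.
Proof.
move=> r r'; have h1 := R_ord r r'; have h2 := R_ord r' r.
rewrite ltxx in h1 h2; apply/eqP; rewrite eq_le !leNgt -h1 -h2 //.
Qed.

Lemma R_inj x x' y : R x y -> R x' y -> x = x'.
Proof.
move=> r r'; have h1 := R_ord r r'; have h2 := R_ord r' r.
rewrite ltxx in h1 h2; apply/eqP; rewrite eq_le !leNgt h1 h2 //.
Qed.

Lemma R_tot x : exists y, R x y.
Proof.
case: (S_succ (pickle x)) => x' [y h]; exists y; exists (pickle x).+1.
by rewrite h en_pickle !inE eqxx orbT.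
Qed.

Lemma R_sur y : exists x, R x y.
Proof.
case: (S_succ (pickle y)) => x [y' h]; exists x; exists (pickle y).+1.
by rewrite h en_pickle !inE eqxx.
Qed.

Lemma R_eqv x y : R x y -> eqv A x y.
Proof. by move=> [n h]; apply: (g_eqv (svalP (S n)) h). Qed.
Lemma R_C x y : R x y -> C x -> b y.
Proof. by move=> [n h]; apply: (g_C (svalP (S n)) h). Qed.

Lemma bf_main : exists g : rat -> rat, bijective g /\ {mono g : x y / x <= y} /\
  (forall x, A x -> g x = x) /\ (forall x, C x -> exists y, b y /\ x = g y).
Proof.
pose k x := sval (constructive_indefinite_description _ (R_tot x)).
pose ki y := sval (constructive_indefinite_description _ (R_sur y)).
have Rk : forall x, R x (k x) by move=> x; rewrite /k; case: constructive_indefinite_description.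
have Rki : forall y, R (ki y) y by move=> y; rewrite /ki; case: constructive_indefinite_description.
have c1 : cancel k ki by move=> x; apply: R_inj (Rki (k x)) (Rk x).
have c2 : cancel ki k by move=> y; apply: R_fun (Rk (ki y)) (Rki y).
exists ki; split; first by exists k.
split.
  by move=> x y; rewrite !leNgt (R_ord (Rki y) (Rki x)).
split.
  move=> x Ax; have e := R_eqv (Rk x).
  by rewrite {1}(eqv_A Ax e) c1.
move=> x Cx; exists (k x); split; first exact: R_C (Rk x) Cx.
by rewrite c1.
Qed.
End BF3.
Lemma itv_open (l r : rat) : order_open (fun y => l < y < r).
Proof. by move=> x hx; exists l, r; split. Qed.

Lemma sub_cl (S : qset) x : S x -> order_closure S x.
Proof. by move=> Sx U _ Ux; exists x. Qed.

Lemma cl_closed (S : qset) x : ~ order_closure S x ->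
  exists l r, l < x /\ x < r /\ forall z, l < z -> z < r -> ~ order_closure S z.
Proof.
move=> ncl.
have [U [oU [Ux nS]]] : exists U, order_open U /\ U x /\ ~ exists y, U y /\ S y.
  apply: NNPP => H; apply: ncl => U oU Ux; apply: NNPP => H2; apply: H.
  by exists U.
case: (oU x Ux) => p [q [/andP [px xq] sub]].
exists p, q; split=> //; split=> // z pz zq clz.
case: (clz _ (@itv_open p q)) => [|y [/andP [h1 h2] Sy]]; first by rewrite pz zq.
by apply: nS; exists y; split=> //; apply: sub; rewrite h1 h2.
Qed.

Lemma nd_NDI (S : qset) : nowhere_dense S -> NDI (order_closure S).
Proof.
move=> nd p q pq.
have [x [/andP [px xq] nclx]] : exists x, p < x < q /\ ~ order_closure S x.
  apply: NNPP => H.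
  have m1 : p < (p + q) / 2 by lra.
  have m2 : (p + q) / 2 < q by lra.
  apply: (nd _ (@itv_open p q)) (_ : p < (p + q) / 2 < q); last by rewrite m1 m2.
  move=> y hy; apply: NNPP => ncl; apply: H; by exists y.
case: (cl_closed nclx) => l [r [lx [xr H]]].
exists (Order.max p l), (Order.min q r); split; first by rewrite le_max lexx.
split; first by rewrite lt_min !gt_max; apply/andP; split; apply/andP; split; lra.
split; first by rewrite ge_min lexx.
move=> z; rewrite gt_max lt_min => /andP [_ lz] /andP [_ zr]; exact: H.
Qed.

Lemma NDI_nd (S : qset) : NDI S -> nowhere_dense S.
Proof.
move=> nd U oU sub x Ux.
case: (oU x Ux) => p [q [/andP [px xq] sU]].
case: (nd p q (lt_trans px xq)) => r [s [pr [rs [sq H]]]].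
have m1 : r < (r + s) / 2 by lra.
have m2 : (r + s) / 2 < s by lra.
have : order_closure S ((r + s) / 2).
  apply: sub; apply: sU; rewrite (le_lt_trans pr m1) (lt_le_trans m2 sq) //.
move/(_ _ (@itv_open r s)); rewrite m1 m2 => /(_ isT) [y [/andP [h1 h2] Sy]].
exact: (H y h1 h2 Sy).
Qed.

Lemma NDI_sub (S T : qset) : NDI T -> (forall x, S x -> T x) -> NDI S.
Proof.
move=> nd sub p q pq; case: (nd p q pq) => r [s [h1 [h2 [h3 h4]]]].
by exists r, s; split=> //; split=> //; split=> // z a c /sub; apply: h4.
Qed.
Definition P4 (n : nat) : rat := 4 ^+ n.
Lemma P4_gt0 n : 0 < P4 n. Proof. by apply: exprn_gt0. Qed.
Lemma P4S n : P4 n.+1 = 4 * P4 n. Proof. by rewrite /P4 exprS. Qed.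
Lemma P4_ge1 n : 1 <= P4 n.
Proof. elim: n => [|n IH]; first by rewrite /P4 expr0. rewrite P4S; lra. Qed.
Lemma P4_gen n : (n%:R : rat) <= P4 n.
Proof.
elim: n => [|n IH]; first by rewrite /P4 expr0 ler01.
rewrite P4S -addn1 natrD; have := P4_ge1 n; lra.
Qed.
Lemma P4_int n : ((4 : int) ^+ n)%:~R = P4 n. Proof. by rewrite rmorphXn. Qed.
Lemma P4_big (e : rat) : 0 < e -> exists n, 1 < P4 n * e.
Proof.
move=> e0; have b0 : 0 <= 1 / e by apply: divr_ge0 => //; apply: ltW.
have := archi_boundP b0; set N := Num.Def.archi_bound _ => hN.
exists N; have h1 := P4_gen N.
have : 1 < N%:R * e by rewrite -ltr_pdivrMr // mul1r; rewrite div1r in hN.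
move=> h2; apply: (lt_le_trans h2); apply: ler_wpM2r => //; exact: ltW.
Qed.
Lemma P4_big2 (e : rat) m : 0 < e -> exists n, (m < n)%N /\ 1 < P4 n * e.
Proof.
move=> e0; case: (P4_big e0) => n hn; exists (maxn n m.+1); split.
  by rewrite leq_max leqnn orbT.
apply: (lt_le_trans hn); apply: ler_wpM2r; first exact: ltW.
rewrite /P4; apply: ler_weXn2l; [lra | exact: leq_maxl].
Qed.

Fixpoint Kn (n : nat) (x : rat) : Prop :=
  match n with
  | 0 => x = 0
  | n'.+1 => exists y (d : int), Kn n' y /\ (d = -1 \/ d = 0 \/ d = 1) /\ x = (d%:~R + y) / 4
  end.
Definition K x := exists n, Kn n x.

Lemma d_bound (d : int) : (d = -1 \/ d = 0 \/ d = 1) -> -1 <= (d%:~R : rat) <= 1.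
Proof. case=> [->|[->|->]]; rewrite ?intrN ?mulr1z ?mulr0z; apply/andP; split; lra. Qed.

Lemma Kn_bound n x : Kn n x -> -(1/3) <= x /\ x <= 1/3.
Proof.
elim: n x => [x ->|n IH x [y [d [Ky [hd ->]]]]]; first by split; lra.
case: (IH y Ky) => h1 h2; case/andP: (d_bound hd) => h3 h4; split; lra.
Qed.

Lemma Kn_approx j n x : Kn n x ->
  exists m : int, m%:~R - 1/3 <= P4 j * x /\ P4 j * x <= m%:~R + 1/3.
Proof.
elim: j n x => [|j IH] n x Kx.
  exists 0; rewrite /P4 expr0 mul1r; case: (Kn_bound Kx) => h1 h2; split; lra.
case: n Kx => [->|n [y [d [Ky [hd ->]]]]].
  by exists 0; rewrite mulr0; split; lra.
case: (IH _ _ Ky) => m [h1 h2]; exists (d * 4 ^+ j + m).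
rewrite intrD intrM P4_int.
have -> : P4 j.+1 * ((d%:~R + y) / 4) = d%:~R * P4 j + P4 j * y.
  by rewrite P4S; field.
split; lra.
Qed.

Lemma K_NDI : NDI K.
Proof.
move=> p q pq.
have e0 : 0 < (q - p) / 2 by lra.
case: (P4_big e0) => j hj.
set t := P4 j; have t0 : 0 < t := P4_gt0 j.
set m0 : int := Num.Def.floor (t * p) + 1.
have hm1 : t * p < m0%:~R by apply: floorD1_gt.
have hm2 : m0%:~R <= t * p + 1.
  rewrite /m0 intrD; have := floor_le (t * p); lra.
exists ((m0%:~R + 1/3) / t), ((m0%:~R + 2/3) / t); split.
  rewrite ler_pdivlMr // mulrC; lra.
split; first by rewrite ltr_pdivrMr // mulrC divfK ?gt_eqF //; lra.
split.
  rewrite ler_pdivrMr // mulrC.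
  have : 2 < t * (q - p) by move: hj; rewrite /t; lra.
  move=> h; lra.
move=> z h1 h2 [n Kz].
rewrite ltr_pdivrMr // mulrC in h1; rewrite ltr_pdivlMr // mulrC in h2.
case: (Kn_approx j Kz) => m; rewrite -/t => [[h3 h4]].
have a1 : m%:~R < (m0 + 1)%:~R :> rat by rewrite intrD; lra.
have a2 : m0%:~R < m%:~R :> rat by lra.
rewrite ltr_int in a1; rewrite ltr_int in a2; lia.
Qed.

Lemma Kn_unit N (d : int) : (0 < N)%N -> (d = -1 \/ d = 1) -> Kn N (d%:~R / P4 N).
Proof.
elim: N => [//|N IH] _ hd; case: N IH => [|N] IH.
  exists 0, d; split=> //; split; first by case: hd; auto.
  by rewrite addr0 /P4 expr1.
exists (d%:~R / P4 N.+1), 0; split; first by apply: IH.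
split; first by auto.
have p0 : P4 N.+1 != 0 by apply/eqP; have := P4_gt0 N.+1; lra.
by rewrite (P4S N.+1) mulr0z add0r; field.
Qed.

Lemma Kn_shift n x : Kn n x -> forall N, (n < N)%N ->
  Kn N (x + 1 / P4 N) /\ Kn N (x - 1 / P4 N).
Proof.
elim: n x => [x -> N hN|n IH x [y [d [Ky [hd ->]]]] N hN].
  rewrite !add0r; split.
  - by have := @Kn_unit N 1 hN (or_intror erefl); rewrite mulr1z.
  - have := @Kn_unit N (-1) hN (or_introl erefl).
    by rewrite intrN mulr1z mulNr.
case: N hN => [//|N]; rewrite ltnS => hN.
case: (IH y Ky N hN) => h1 h2.
have p0 : P4 N != 0 by apply/eqP; have := P4_gt0 N; lra.
split.
- exists (y + 1 / P4 N), d; split=> //; split=> //.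
  by rewrite P4S; field.
- exists (y - 1 / P4 N), d; split=> //; split=> //.
  by rewrite P4S; field.
Qed.

Lemma K_perf x : K x -> forall e, 0 < e ->
  (exists w, K w /\ x < w /\ w < x + e) /\ (exists w, K w /\ x - e < w /\ w < x).
Proof.
move=> [n Kx] e e0; case: (P4_big2 n e0) => N [hN hb].
case: (Kn_shift Kx hN) => h1 h2.
have t0 := P4_gt0 N.
have i0 : 0 < 1 / P4 N by apply: divr_gt0.
have i1 : 1 / P4 N < e by rewrite ltr_pdivrMr // mulrC.
split.
- exists (x + 1 / P4 N); split; first by exists N.
  split; lra.
- exists (x - 1 / P4 N); split; first by exists N.
  split; lra.
Qed.
Lemma lnp (Q : nat -> Prop) : (exists n, Q n) -> exists n, Q n /\ forall j, (j < n)%N -> ~ Q j.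
Proof.
move=> [n Qn]; apply: NNPP => H.
suff : forall k j, (j <= k)%N -> ~ Q j by move/(_ n n (leqnn n)).
elim=> [|k IH] j hj Qj.
  by apply: H; exists j; split=> // i; move: hj; rewrite leqn0 => /eqP ->.
apply: H; exists j; split=> // i hi Qi; apply: (IH i) => //.
by rewrite -ltnS; apply: leq_trans hi hj.
Qed.

Lemma floor_eq (m : int) (X : rat) : m%:~R <= X -> X < m%:~R + 1 -> Num.floor X = m.
Proof.
move=> h1 h2; apply/eqP; rewrite eq_le; apply/andP; split.
- by rewrite -ltzD1 floor_lt_int intrD.
- by rewrite floor_ge_int.
Qed.

Lemma floor_int (m : int) : Num.floor (m%:~R : rat) = m.
Proof. by apply: floor_eq => //; lra. Qed.

Lemma floor4 (X Y : rat) : Num.floor (4 * X) = Num.floor (4 * Y) -> Num.floor X = Num.floor Y.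
Proof.
have key : forall X Y : rat, (Num.floor X < Num.floor Y) -> (Num.floor (4 * X) < Num.floor (4 * Y)).
  move=> {}X {}Y lt.
  have a1 : X < (Num.floor X + 1)%:~R by apply: floorD1_gt.
  have a2 : (Num.floor X + 1)%:~R <= (Num.floor Y)%:~R :> rat by rewrite ler_int; lia.
  have a3 : (Num.floor Y)%:~R <= Y := floor_le Y.
  have b1 : Num.floor (4 * X) < 4 * Num.floor Y.
    rewrite floor_lt_int intrM; lra.
  have b2 : 4 * Num.floor Y <= Num.floor (4 * Y).
    rewrite floor_ge_int intrM; lra.
  lia.
move=> e; apply/eqP; rewrite eq_le !leNgt; apply/andP; split; apply/negP => h.
- by have := key _ _ h; rewrite e ltxx.
- by have := key _ _ h; rewrite e ltxx.
Qed.

Definition fl (n : nat) (x : rat) : int := Num.floor (P4 n * x).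

Lemma fl_down n x y : fl n.+1 x = fl n.+1 y -> fl n x = fl n y.
Proof. by rewrite /fl !P4S -!mulrA; apply: floor4. Qed.

Lemma fl_le n k x y : fl (n + k) x = fl (n + k) y -> fl n x = fl n y.
Proof.
elim: k => [|k IH]; first by rewrite addn0.
by rewrite addnS => /fl_down; apply: IH.
Qed.

Lemma fl_leq n n' x y : (n <= n')%N -> fl n' x = fl n' y -> fl n x = fl n y.
Proof. by move=> h; rewrite -(subnKC h); apply: fl_le. Qed.

Lemma P4D a c : P4 (a + c) = P4 a * P4 c. Proof. by rewrite /P4 exprD. Qed.

Lemma P4_mul_int a (m : int) : P4 a * m%:~R = (4 ^+ a * m)%:~R.
Proof. by rewrite intrM P4_int. Qed.

Lemma fl_spec n x : (fl n x)%:~R <= P4 n * x /\ P4 n * x < (fl n x)%:~R + 1.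
Proof. split; first exact: floor_le. by have := floorD1_gt (P4 n * x); rewrite intrD. Qed.

Lemma eqv_noA (A : qset) p q : p <= q -> (forall z, A z -> p <= z -> z <= q -> False) -> eqv A p q.
Proof.
move=> pq H z Az; case: (ltP z p) => zp.
  have zq : z < q by apply: lt_le_trans zp pq.
  rewrite zq; split=> //.
  by rewrite ltNge (ltW zp) ltNge (ltW zq).
case: (ltP q z) => qz; last by case: (H z Az zp qz).
have pz : p < z by apply: le_lt_trans pq qz.
split; last by rewrite pz.
by apply/esym/negbTE; rewrite -leNgt; apply: ltW.
Qed.
Lemma Kb x : K x -> -(1/3) <= x /\ x <= 1/3.
Proof. by move=> [n h]; apply: Kn_bound h. Qed.

Section Whit.
Variable A : qset.
Hypothesis hAcl : forall x, ~ A x -> exists l r, l < x /\ x < r /\ forall z, l < z -> z < r -> ~ A z.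
Hypothesis hAnd : NDI A.

Definition wgood n x := forall z, A z -> (fl n x)%:~R <= P4 n * z -> P4 n * z <= (fl n x)%:~R + 1 -> False.
Definition wmin n x := wgood n x /\ forall j, (j < n)%N -> ~ wgood j x.
Definition Bw x := exists n, wmin n x /\ K (P4 n * x - (fl n x)%:~R - 1/2).
Definition bw x := A x \/ Bw x.

Lemma wgood_same n x y : fl n x = fl n y -> wgood n x -> wgood n y.
Proof. by rewrite /wgood => ->. Qed.

Lemma wmin_same n x y : wmin n x -> fl n x = fl n y -> wmin n y.
Proof.
move=> [g m] e; split; first exact: wgood_same e g.
move=> j hj gj; apply: (m j hj); apply: wgood_same gj.
by apply/esym/(fl_leq _ e); apply: ltnW.
Qed.

Lemma wgood_nA n x : wgood n x -> ~ A x.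
Proof. by move=> g Ax; case: (fl_spec n x) => h1 h2; apply: (g x Ax) => //; apply: ltW. Qed.

Lemma P4_ne0 n : P4 n != 0. Proof. by apply/eqP; have := P4_gt0 n; lra. Qed.

Lemma mul_div n (X : rat) : P4 n * (X / P4 n) = X.
Proof. by rewrite mulrC divfK // P4_ne0. Qed.

Lemma wmin_ex x : ~ A x -> exists n, wmin n x.
Proof.
move=> Ax; apply: lnp; case: (hAcl Ax) => l [r [lx [xr H]]].
set e := Order.min (x - l) (r - x).
have e0 : 0 < e by rewrite lt_min !subr_gt0 lx xr.
have e1 : e <= x - l by rewrite ge_min lexx.
have e2 : e <= r - x by rewrite ge_min lexx orbT.
case: (P4_big e0) => n hn; exists n => z Az h1 h2.
have P0 := P4_gt0 n; case: (fl_spec n x) => f1 f2.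
have q1 : P4 n * e <= P4 n * (x - l) by rewrite ler_pM2l.
have q2 : P4 n * e <= P4 n * (r - x) by rewrite ler_pM2l.
rewrite !mulrBr in q1 q2.
apply: (H z) => //.
- rewrite -(ltr_pM2l P0); lra.
- rewrite -(ltr_pM2l P0); lra.
Qed.

Lemma center n u : wmin n u ->
  Bw (((fl n u)%:~R + 1/2) / P4 n) /\ fl n (((fl n u)%:~R + 1/2) / P4 n) = fl n u.
Proof.
move=> wm; set c := ((fl n u)%:~R + 1/2) / P4 n.
have Pc : P4 n * c = (fl n u)%:~R + 1/2 by rewrite /c mul_div.
have fc : fl n c = fl n u by rewrite /fl Pc; apply: floor_eq; lra.
split=> //; exists n; split; first by apply: wmin_same wm (esym fc).
rewrite Pc fc; have -> : (fl n u)%:~R + 1 / 2 - (fl n u)%:~R - 1 / 2 = 0 :> rat by ring.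
by exists 0%N.
Qed.

Lemma Bw_perf x : Bw x -> rlim bw x /\ llim bw x.
Proof.
move=> [n [wm Kx]]; set m := fl n x; set rho := P4 n * x - m%:~R - 1/2.
have P0 := P4_gt0 n.
have gen : forall r, K r -> Bw ((m%:~R + 1/2 + r) / P4 n) /\
    P4 n * ((m%:~R + 1/2 + r) / P4 n) = m%:~R + 1/2 + r.
  move=> r Kr; have Py := mul_div n (m%:~R + 1/2 + r); split=> //.
  case: (Kb Kr) => k1 k2.
  have fy : fl n ((m%:~R + 1/2 + r) / P4 n) = m by rewrite /fl Py; apply: floor_eq; lra.
  exists n; split; first by apply: wmin_same wm (esym fy).
  by rewrite Py fy; have -> : m%:~R + 1 / 2 + r - m%:~R - 1 / 2 = r by ring.
split=> e e0; have eP : 0 < P4 n * e by apply: mulr_gt0.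
- case: (K_perf Kx eP) => [[r [Kr [h1 h2]]] _].
  case: (gen r Kr) => By Py; exists ((m%:~R + 1/2 + r) / P4 n); split; first by right.
  have hr : rho = P4 n * x - m%:~R - 1/2 by [].
  split; rewrite -(ltr_pM2l P0) Py ?mulrDr; lra.
- case: (K_perf Kx eP) => [_ [r [Kr [h1 h2]]]].
  case: (gen r Kr) => By Py; exists ((m%:~R + 1/2 + r) / P4 n); split; first by right.
  have hr : rho = P4 n * x - m%:~R - 1/2 by [].
  split; rewrite -(ltr_pM2l P0) Py ?mulrBr; lra.
Qed.
Lemma P3l u : ~ A u -> exists w, bw w /\ w < u /\ eqv A w u.
Proof.
move=> Au; case: (wmin_ex Au) => n [gn mn].
set m := fl n u; have P0 := P4_gt0 n.
case: (fl_spec n u); rewrite -/m => fu1 fu2.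
case: (center (conj gn mn)); rewrite -/m => Bc fc.
set c := (m%:~R + 1/2) / P4 n in Bc fc.
have Pc : P4 n * c = m%:~R + 1/2 by rewrite /c mul_div.
case: (ltP c u) => cu.
  exists c; split; first by right.
  split=> //; apply: eqv_noA (ltW cu) _ => z Az h1 h2.
  rewrite -(ler_pM2l P0) in h1; rewrite -(ler_pM2l P0) in h2.
  apply: (gn z Az); rewrite -/m; lra.
set l := m%:~R / P4 n.
have Pl : P4 n * l = m%:~R by rewrite /l mul_div.
have lu : l <= u by rewrite -(ler_pM2l P0); lra.
have Al : ~ A l by move=> Al; apply: (gn l Al); rewrite -/m; lra.
case: (hAcl Al) => l1 [r1 [l1l [lr1 Hl]]].
set v := (Order.max l1 (l - 1 / P4 n) + l) / 2.
have iP : 0 < 1 / P4 n by apply: divr_gt0.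
have mx : Order.max l1 (l - 1 / P4 n) < l by rewrite gt_max l1l /=; lra.
have v1 : l1 < v.
  have : l1 <= Order.max l1 (l - 1 / P4 n) by rewrite le_max lexx.
  move=> h; rewrite /v; lra.
have v2 : l - 1 / P4 n < v.
  have : l - 1 / P4 n <= Order.max l1 (l - 1 / P4 n) by rewrite le_max lexx orbT.
  move=> h; rewrite /v; lra.
have vl : v < l by rewrite /v; lra.
have Av : ~ A v by apply: Hl => //; apply: lt_trans lr1.
case: (wmin_ex Av) => n' [gn' mn'].
set m' := fl n' v; have P0' := P4_gt0 n'.
case: (fl_spec n' v); rewrite -/m' => fv1 fv2.
have Pvl : P4 n' * v < P4 n' * l by rewrite ltr_pM2l.
have key : m'%:~R + 1 <= P4 n' * l.
  rewrite leNgt; apply/negP => H.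
  case: (leqP n n') => hnn'.
  + have e : P4 n' * l = (4 ^+ (n' - n) * m)%:~R.
      by rewrite -(subnK hnn') P4D -mulrA Pl P4_mul_int subnK.
    have i1 : m' < 4 ^+ (n' - n) * m by rewrite -(ltr_int rat) -e; lra.
    have i2 : 4 ^+ (n' - n) * m < m' + 1 by rewrite -(ltr_int rat) -e intrD.
    by rewrite ltzD1 in i2; move: i1; rewrite ltNge i2.
  + have fl1 : fl n l = fl n u by rewrite /fl Pl floor_int.
    have fl2 : fl n' l = fl n' u by apply: fl_leq fl1; apply: ltnW.
    have fl3 : fl n' l = m' by rewrite /fl; apply: floor_eq; lra.
    apply: (mn n' hnn'); apply: (wgood_same _ gn'); by rewrite -/m' -fl3 fl2.
case: (center (conj gn' mn')); rewrite -/m' => Bc' fc'.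
set w := (m'%:~R + 1/2) / P4 n' in Bc' fc'.
have Pw : P4 n' * w = m'%:~R + 1/2 by rewrite /w mul_div.
have wl : w < l by rewrite -(ltr_pM2l P0'); lra.
exists w; split; first by right.
split; first by apply: lt_le_trans wl lu.
apply: eqv_noA (ltW (lt_le_trans wl lu)) _ => z Az h1 h2.
rewrite -(ler_pM2l P0') Pw in h1.
case: (leP (P4 n' * z) (m'%:~R + 1)) => hz.
  by apply: (gn' z Az); rewrite -/m'; lra.
have vz : v < z by rewrite -(ltr_pM2l P0'); lra.
case: (ltP z l) => zl.
  by apply: (Hl z) => //; [apply: lt_trans vz | apply: lt_trans lr1].
rewrite -(ler_pM2l P0) in zl; rewrite -(ler_pM2l P0) in h2.
apply: (gn z Az); rewrite -/m; lra.
Qed.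
Lemma P3r u : ~ A u -> exists w, bw w /\ u < w /\ eqv A u w.
Proof.
move=> Au; case: (wmin_ex Au) => n [gn mn].
set m := fl n u; have P0 := P4_gt0 n.
case: (fl_spec n u); rewrite -/m => fu1 fu2.
case: (center (conj gn mn)); rewrite -/m => Bc fc.
set c := (m%:~R + 1/2) / P4 n in Bc fc.
have Pc : P4 n * c = m%:~R + 1/2 by rewrite /c mul_div.
case: (ltP u c) => uc.
  exists c; split; first by right.
  split=> //; apply: eqv_noA (ltW uc) _ => z Az h1 h2.
  rewrite -(ler_pM2l P0) in h1; rewrite -(ler_pM2l P0) in h2.
  apply: (gn z Az); rewrite -/m; lra.
set r := (m%:~R + 1) / P4 n.
have Pr : P4 n * r = m%:~R + 1 by rewrite /r mul_div.
have ur : u < r by rewrite -(ltr_pM2l P0); lra.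
have Ar : ~ A r by move=> Ar; apply: (gn r Ar); rewrite -/m; lra.
case: (hAcl Ar) => l1 [r1 [l1r [rr1 Hr]]].
set v := (r + Order.min r1 (r + 1 / P4 n)) / 2.
have iP : 0 < 1 / P4 n by apply: divr_gt0.
have mn0 : r < Order.min r1 (r + 1 / P4 n) by rewrite lt_min rr1 /=; lra.
have v1 : v < r1.
  have : Order.min r1 (r + 1 / P4 n) <= r1 by rewrite ge_min lexx.
  move=> h; rewrite /v; lra.
have rv : r < v by rewrite /v; lra.
have Av : ~ A v by apply: Hr => //; apply: lt_trans rv.
case: (wmin_ex Av) => n' [gn' mn'].
set m' := fl n' v; have P0' := P4_gt0 n'.
case: (fl_spec n' v); rewrite -/m' => fv1 fv2.
have Prv : P4 n' * r < P4 n' * v by rewrite ltr_pM2l.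
have Pur : P4 n' * u < P4 n' * r by rewrite ltr_pM2l.
have key : P4 n' * r <= m'%:~R.
  rewrite leNgt; apply/negP => H.
  case: (leqP n n') => hnn'.
  + have e : P4 n' * r = (4 ^+ (n' - n) * (m + 1))%:~R.
      by rewrite -(subnK hnn') P4D -mulrA Pr -P4_mul_int subnK // intrD.
    have i1 : m' < 4 ^+ (n' - n) * (m + 1) by rewrite -(ltr_int rat) -e.
    have i2 : 4 ^+ (n' - n) * (m + 1) < m' + 1 by rewrite -(ltr_int rat) -e intrD; lra.
    by rewrite ltzD1 in i2; move: i1; rewrite ltNge i2.
  + have fu : fl n' u = m'.
      rewrite /fl; apply: floor_eq; last by lra.
      rewrite leNgt; apply/negP => H2.
      have eP : P4 n = P4 (n - n') * P4 n' by rewrite -P4D subnK // ltnW.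
      have Q0 := P4_gt0 (n - n').
      have j1 : P4 n * u < (4 ^+ (n - n') * m')%:~R.
        by rewrite eP -P4_mul_int -mulrA ltr_pM2l.
      have j2 : (4 ^+ (n - n') * m')%:~R < P4 n * r.
        by rewrite eP -P4_mul_int -mulrA ltr_pM2l.
      have k1 : m < 4 ^+ (n - n') * m' by rewrite -(ltr_int rat); lra.
      have k2 : 4 ^+ (n - n') * m' < m + 1 by rewrite -(ltr_int rat) intrD; lra.
      by rewrite ltzD1 in k2; move: k1; rewrite ltNge k2.
    apply: (mn n' hnn'); apply: (wgood_same _ gn'); by rewrite -/m' fu.
case: (center (conj gn' mn')); rewrite -/m' => Bc' fc'.
set w := (m'%:~R + 1/2) / P4 n' in Bc' fc'.
have Pw : P4 n' * w = m'%:~R + 1/2 by rewrite /w mul_div.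
have rw : r < w by rewrite -(ltr_pM2l P0'); lra.
exists w; split; first by right.
split; first by apply: lt_trans ur rw.
apply: eqv_noA (ltW (lt_trans ur rw)) _ => z Az h1 h2.
rewrite -(ler_pM2l P0') Pw in h2.
case: (leP z r) => zr.
  rewrite -(ler_pM2l P0) in zr; rewrite -(ler_pM2l P0) in h1.
  by apply: (gn z Az); rewrite -/m; lra.
case: (ltP (P4 n' * z) m'%:~R) => hz.
  have zv : z < v by rewrite -(ltr_pM2l P0'); lra.
  by apply: (Hr z (lt_trans l1r zr) (lt_trans zv v1) Az).
by apply: (gn' z Az); rewrite -/m'; lra.
Qed.
Lemma A_perf z : A z -> rlim bw z /\ llim bw z.
Proof.
move=> Az; split=> e e0.
- have ze : z < z + e by lra.
  case: (hAnd ze) => r [s [h1 [h2 [h3 h4]]]].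
  have m1 : r < (r + s) / 2 by lra.
  have m2 : (r + s) / 2 < s by lra.
  case: (P3l (h4 _ m1 m2)) => w [bw_ [wu ewu]].
  exists w; split=> //; split; last by lra.
  case: (ewu z Az) => -> _; lra.
- have ze : z - e < z by lra.
  case: (hAnd ze) => r [s [h1 [h2 [h3 h4]]]].
  have m1 : r < (r + s) / 2 by lra.
  have m2 : (r + s) / 2 < s by lra.
  case: (P3r (h4 _ m1 m2)) => w [bw_ [uw euw]].
  exists w; split=> //; split; first by lra.
  case: (euw z Az) => _ <-; lra.
Qed.

Lemma bw_perf x : bw x -> rlim bw x /\ llim bw x.
Proof. by case=> [/A_perf|/Bw_perf]. Qed.

Lemma wmin_unique n n' x : wmin n x -> wmin n' x -> n = n'.
Proof.
move=> [g m] [g' m']; case: (ltngtP n n') => // h.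
- by case: (m' n h g).
- by case: (m n' h g').
Qed.

Lemma bw_NDI : NDI bw.
Proof.
move=> p q pq; case: (hAnd pq) => r [s [pr [rs [sq Hrs]]]].
have e0 : 0 < (s - r) / 2 by lra.
case: (P4_big e0) => M hM; set PM := P4 M; have PM0 : 0 < PM := P4_gt0 M.
have hM' : 2 < PM * s - PM * r by move: hM; rewrite /PM mulrA mulrBr; lra.
set m0 : int := Num.floor (PM * r) + 1.
have hm1 : PM * r < m0%:~R by apply: floorD1_gt.
have hm2 : m0%:~R <= PM * r + 1.
  rewrite /m0 intrD; have := floor_le (PM * r); lra.
set d1 := m0%:~R / PM; set d2 := (m0%:~R + 1) / PM.
have Pd1 : PM * d1 = m0%:~R by rewrite /d1 /PM mul_div.
have Pd2 : PM * d2 = m0%:~R + 1 by rewrite /d2 /PM mul_div.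
have rd1 : r < d1 by rewrite -(ltr_pM2l PM0); lra.
have d2s : d2 < s by rewrite -(ltr_pM2l PM0); lra.
have d12 : d1 < d2 by rewrite -(ltr_pM2l PM0); lra.
set y0 := (m0%:~R + 1/2) / PM.
have Py0 : PM * y0 = m0%:~R + 1/2 by rewrite /y0 /PM mul_div.
have fy0 : fl M y0 = m0 by rewrite /fl -/PM Py0; apply: floor_eq; lra.
have inD : forall z, d1 < z -> z < d2 -> fl M z = m0 /\ r < z /\ z < s.
  move=> z h1 h2; split; last by split; [apply: lt_trans h1 | apply: lt_trans d2s].
  rewrite -(ltr_pM2l PM0) in h1; rewrite -(ltr_pM2l PM0) in h2.
  by rewrite /fl -/PM; apply: floor_eq; lra.
have gM : wgood M y0.
  move=> z Az; rewrite fy0 -/PM => h1 h2.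
  apply: (Hrs z) => //.
  - rewrite -(ltr_pM2l PM0); lra.
  - rewrite -(ltr_pM2l PM0); lra.
case: (lnp (ex_intro (fun n => wgood n y0) M gM)) => n [gn mn].
have nM : (n <= M)%N by rewrite leqNgt; apply/negP => h; apply: (mn M h gM).
set k := fl n y0; set Pn := P4 n; have Pn0 : 0 < Pn := P4_gt0 n.
have Pd : Pn * d1 < Pn * d2 by rewrite ltr_pM2l.
have a0 : Pn * d1 - k%:~R - 1/2 < Pn * d2 - k%:~R - 1/2 by lra.
case: (K_NDI a0) => al [be [h1 [h2 [h3 h4]]]].
set rr := (al + k%:~R + 1/2) / Pn; set ss := (be + k%:~R + 1/2) / Pn.
have Prr : Pn * rr = al + k%:~R + 1/2 by rewrite /rr /Pn mul_div.
have Pss : Pn * ss = be + k%:~R + 1/2 by rewrite /ss /Pn mul_div.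
have d1rr : d1 <= rr by rewrite -(ler_pM2l Pn0); lra.
have ssd2 : ss <= d2 by rewrite -(ler_pM2l Pn0); lra.
exists rr, ss; split; first by lra.
split; first by rewrite -(ltr_pM2l Pn0); lra.
split; first by lra.
move=> z z1 z2 [Az|[n2 [wm2 Kz]]].
  case: (inD z (le_lt_trans d1rr z1) (lt_le_trans z2 ssd2)) => _ [hz1 hz2].
  exact: (Hrs z hz1 hz2 Az).
case: (inD z (le_lt_trans d1rr z1) (lt_le_trans z2 ssd2)) => fz _.
have fnz : fl n y0 = fl n z by apply: (fl_leq nM); rewrite fz fy0.
have wmz : wmin n z by apply: wmin_same (conj gn mn) fnz.
have e2 := wmin_unique wm2 wmz; subst n2.
rewrite -fnz -/k in Kz.
rewrite -(ltr_pM2l Pn0) Prr in z1; rewrite -(ltr_pM2l Pn0) Pss in z2.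
apply: (h4 (P4 n * z - k%:~R - 1 / 2)) => //; rewrite -/Pn; lra.
Qed.

End Whit.
Theorem mainTheorem5 : cofinal_orbits.
Proof.
move=> a nda.
pose A := order_closure a.
have hAcl : forall x, ~ A x -> exists l r, l < x /\ x < r /\ forall z, l < z -> z < r -> ~ A z.
  by move=> x; apply: cl_closed.
have hAnd : NDI A := nd_NDI nda.
exists (bw A); split; first exact: NDI_nd (bw_NDI hAnd).
move=> c ndc.
have hC : NDI c := NDI_sub (nd_NDI ndc) (@sub_cl c).
have hAb : forall x, A x -> bw A x by move=> x Ax; left.
have hbr : forall x, bw A x -> rlim (bw A) x by move=> x h; case: (bw_perf hAcl hAnd h).
have hbl : forall x, bw A x -> llim (bw A) x by move=> x h; case: (bw_perf hAcl hAnd h).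
case: (@bf_main A (bw A) c hAb hbr hbl (P3l hAcl) (P3r hAcl) hC)
  => g [bij [mono [fx cov]]].
exists g; split; first by split=> // x ax; apply: fx; apply: sub_cl.
by move=> x cx; apply: cov.
Qed.
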